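(* For every fixed positive integer $n_0$, all sufficiently large superabundant numbers are multiples of $n_0$; that is, only finitely many superabundant numbers are not divisible by $n_0$.
   Context: For a positive integer $n$, $\sigma(n)=\sum_{d\mid n} d$. A positive integer $s$ is superabundant if $\sigma(n)/n<\sigma(s)/s$ for all integers $0<n<s$. *)

(* Defs.v *)
From mathcomp Require Import all_boot all_order all_algebra.
Set Implicit Arguments. Unset Strict Implicit. Unset Printing Implicit Defensive.
Import Order.TTheory GRing.Theory Num.Theory.

Definition sigma (n : nat) : nat := \sum_(d < n.+1 | d %| n) d.

Definition abund (n : nat) : rat := ((sigma n)%:R / n%:R)%R.

Definition superabundant (s : nat) : Prop :=
  0 < s /\ forall n : nat, 0 < n -> n < s -> (abund n < abund s)%R.

(* Main.v *)
Require Import Defs.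
From mathcomp Require Import all_boot all_order all_algebra ring zify.
Import Order.TTheory GRing.Theory Num.Theory.

Lemma sum_div n (F : nat -> nat) : 0 < n ->
  \sum_(d < n.+1 | d %| n) F d = \sum_(d <- divisors n) F d.
Proof.
move=> n0; rewrite -(big_mkord (fun d => d %| n) F) -big_filter.
apply: perm_big; apply: uniq_perm.
- by rewrite filter_uniq // iota_uniq.
- exact: divisors_uniq.
move=> d; rewrite mem_filter mem_iota -dvdn_divisors //.
case: (boolP (d %| n)) => //= dn; rewrite add0n ltnS dvdn_leq //.
Qed.

Lemma sigmaM a b : coprime a b -> 0 < a -> 0 < b -> sigma (a * b) = sigma a * sigma b.
Proof.
move=> cab a0 b0.
rewrite /sigma !(sum_div _ (fun d => d)) ?muln_gt0 ?a0 //.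
transitivity (\sum_(i <- [seq x * y | x <- divisors a, y <- divisors b]) i).
  apply: perm_big; apply: uniq_perm.
  - exact: divisors_uniq.
  - apply: allpairs_uniq; try exact: divisors_uniq.
    move=> [x1 y1] [x2 y2] /allpairsP[[u1 v1] [/= H1 H2 [-> ->]]]
       /allpairsP[[u2 v2] [/= H3 H4 [-> ->]]] /= E.
    move: H1 H2 H3 H4; rewrite -!dvdn_divisors // => H1 H2 H3 H4.
    have c1 : coprime a v1 by apply: coprime_dvdr H2 cab.
    have c2 : coprime a v2 by apply: coprime_dvdr H4 cab.
    have e1 : u1 = u2.
      have := Gauss_gcdl u1 c1; have := Gauss_gcdl u2 c2.
      rewrite E => ->; rewrite (gcdn_idPr H1) (gcdn_idPr H3) => ->.
      done.
    subst u2; have u0 : 0 < u1 by apply: dvdn_gt0 H1.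
    by move/eqP: E; rewrite eqn_pmul2l // => /eqP ->.
  move=> d; apply/idP/allpairsP.
  - rewrite -dvdn_divisors ?muln_gt0 ?a0 // => dab.
    exists (gcdn d a, gcdn d b); rewrite /= -!dvdn_divisors // dvdn_gcdr dvdn_gcdr.
    split => //; apply/eqP; rewrite eqn_dvd; apply/andP; split.
      have h1 : d %| gcdn d a * b by rewrite muln_gcdl dvdn_gcd dvdn_mulr.
      have h2 : d %| gcdn d a * d by rewrite dvdn_mull.
      have : d %| gcdn (gcdn d a * b) (gcdn d a * d) by rewrite dvdn_gcd h1 h2.
      by rewrite -muln_gcdr [gcdn b d]gcdnC.
    rewrite Gauss_dvd ?dvdn_gcdl ?dvdn_gcdl //.
    apply: coprime_dvdl (dvdn_gcdr _ _) _; apply: coprime_dvdr (dvdn_gcdr _ _) _.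
    done.
  - move=> [[x y] [/= H1 H2 ->]]; move: H1 H2; rewrite -!dvdn_divisors ?muln_gt0 ?a0 //.
    exact: dvdn_mul.
rewrite big_allpairs_dep big_distrl /=; apply: eq_bigr => i _; rewrite big_distrr.
done.
Qed.

Definition S (p k : nat) := \sum_(i < k.+1) p ^ i.

Lemma sigma_pexp p k : prime p -> sigma (p ^ k) = S p k.
Proof.
move=> pp; have p1 := prime_gt1 pp.
rewrite /sigma (sum_div _ (fun d => d)) ?expn_gt0 ?prime_gt0 //.
rewrite /S -(big_mkord xpredT (fun i => p ^ i)) -(big_map (expn p) xpredT (fun d => d)).
apply: perm_big; apply: uniq_perm.
- exact: divisors_uniq.
- by rewrite map_inj_uniq ?iota_uniq //; apply: expnI.
move=> d; rewrite -dvdn_divisors ?expn_gt0 ?prime_gt0 //.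
apply/idP/mapP.
- by case/(dvdn_pfactor _ _ pp) => m mk ->; exists m => //; rewrite mem_iota add0n ltnS mk.
- by move=> [m]; rewrite mem_iota add0n ltnS => /andP[_ mk] ->; apply/(dvdn_pfactor _ _ pp); exists m.
Qed.

Lemma S_succ p k : S p k.+1 = S p k + p ^ k.+1.
Proof. by rewrite /S big_ord_recr. Qed.

Lemma S_rec p k : S p k.+1 = 1 + p * S p k.
Proof.
elim: k => [|k IH]; first by rewrite /S big_ord_recr !big_ord1 /= expn1 muln1.
by rewrite S_succ {1}IH S_succ mulnDr -expnS addnA.
Qed.

Lemma S_split p a b : S p (a + b).+1 = S p a + p ^ a.+1 * S p b.
Proof.
elim: b => [|b IH]; first by rewrite addn0 S_succ {3}/S big_ord1 expn0 muln1.
by rewrite addnS S_succ IH S_succ mulnDr addnA -expnD addSn addnS.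
Qed.

Lemma S_ge p k : p ^ k <= S p k.
Proof. by case: k => [|k]; rewrite ?S_succ ?leq_addl // /S big_ord1. Qed.

Lemma S_gt0 p k : 0 < S p k.
Proof. by case: k => [|k]; rewrite ?S_rec // /S big_ord1. Qed.

Lemma S_lt p k : 1 < p -> S p k < p ^ k.+1.
Proof.
move=> p1; elim: k => [|k IH]; first by rewrite /S big_ord1 expn1.
rewrite S_succ (expnS p k.+1).
apply: (@leq_trans (p ^ k.+1 + p ^ k.+1)); first by rewrite ltn_add2r.
by rewrite addnn -mul2n leq_mul2r p1 orbT.
Qed.

Lemma abund_lt m s : 0 < m -> 0 < s -> (abund m < abund s)%R -> sigma m * s < sigma s * m.
Proof.
move=> m0 s0; rewrite /abund ltr_pdivrMr ?ltr0n // mulrAC ltr_pdivlMr ?ltr0n //.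
by rewrite -!natrM ltr_nat.
Qed.

Lemma coprime_primes p q : prime p -> prime q -> p != q -> coprime p q.
Proof. by move=> pp pq npq; rewrite prime_coprime // dvdn_prime2. Qed.

Lemma sigma3 p q a b w : prime p -> prime q -> p != q -> coprime p w -> coprime q w ->
  0 < w -> sigma (p ^ a * (q ^ b * w)) = S p a * (S q b * sigma w).
Proof.
move=> pp pq npq cpw cqw w0.
have p0 := prime_gt0 pp; have q0 := prime_gt0 pq.
have cpq := @coprime_primes p q pp pq npq.
rewrite sigmaM ?expn_gt0 ?p0 ?muln_gt0 ?expn_gt0 ?q0 ?w0 //.
  by rewrite sigmaM ?expn_gt0 ?q0 // ?coprimeXl // !sigma_pexp.
by rewrite coprimeXl // coprimeMr cpw coprimeXr.
Qed.

Lemma exch p q k j t w : prime p -> prime q -> p != q -> coprime p w -> coprime q w ->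
  0 < w -> superabundant (p ^ k * (q ^ j * w)) -> 0 < t -> t <= j -> p < q ^ t ->
  q ^ t * S q (j - t) < p * S p k * S q t.-1.
Proof.
move=> pp pq npq cpw cqw w0 [s0 SA] t0 tj pqt.
have p0 := prime_gt0 pp; have q0 := prime_gt0 pq.
have cpq := @coprime_primes p q pp pq npq.
have ej : q ^ j = q ^ (j - t) * q ^ t by rewrite -expnD subnK.
set m := p ^ k.+1 * (q ^ (j - t) * w).
have m0 : 0 < m by rewrite !muln_gt0 !expn_gt0 p0 q0 w0.
have ms : m < p ^ k * (q ^ j * w).
  rewrite /m ej expnS.
  have -> : p * p ^ k * (q ^ (j - t) * w) = (p ^ k * q ^ (j - t) * w) * p by ring.
  have -> : p ^ k * (q ^ (j - t) * q ^ t * w) = (p ^ k * q ^ (j - t) * w) * q ^ t by ring.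
  by rewrite ltn_pmul2l // !muln_gt0 !expn_gt0 p0 q0 w0.
have H := @abund_lt _ _ m0 s0 (SA m m0 ms).
rewrite /m !(@sigma3 p q) // ej -[p ^ k.+1]/(p ^ k.+1) expnS in H.
have ES : S q j = S q t.-1 + q ^ t * S q (j - t).
  by rewrite -[t in q ^ t]prednK // -S_split -addSn prednK // subnKC.
rewrite ES in H.
rewrite S_rec in H.
set X := p ^ k * q ^ (j - t) * w * sigma w in H.
have X0 : 0 < X.
  rewrite /X !muln_gt0 !expn_gt0 p0 q0 w0 /=.
  by rewrite /sigma (bigD1 (Ordinal (ltnSn w))) //= addn_gt0 w0.
move: H.
have -> : (1 + p * S p k) * (S q (j - t) * sigma w) * (p ^ k * (q ^ (j - t) * q ^ t * w))
  = ((1 + p * S p k) * S q (j - t) * q ^ t) * X by rewrite /X; ring.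
have -> : S p k * ((S q t.-1 + q ^ t * S q (j - t)) * sigma w) * (p * p ^ k * (q ^ (j - t) * w))
  = (S p k * (S q t.-1 + q ^ t * S q (j - t)) * p) * X by rewrite /X; ring.
rewrite ltn_pmul2r //.
nia.
Qed.

Lemma exch2 p q s t : prime p -> prime q -> p != q -> superabundant s ->
  0 < t -> t <= logn q s -> p < q ^ t ->
  q ^ t * S q (logn q s - t) < p * S p (logn p s) * S q t.-1.
Proof.
move=> pp pq npq SA t0 tj pqt.
have [s0 _] := SA.
case: (pfactor_coprime pp s0) => u cpu es.
have u0 : 0 < u by move: s0; rewrite es muln_gt0 => /andP[].
case: (pfactor_coprime pq u0) => w cqw eu.
have w0 : 0 < w by move: u0; rewrite eu muln_gt0 => /andP[].
have lq : logn q s = logn q u.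
  rewrite {1}es lognM ?u0 ?expn_gt0 ?prime_gt0 // lognX (@logn_prime q p pp) eq_sym (negbTE npq).
  by rewrite muln0 addn0.
have cpw : coprime p w by apply: coprime_dvdr cpu; rewrite eu dvdn_mulr.
have E : s = p ^ logn p s * (q ^ logn q s * w) by rewrite lq {1}es {1}eu mulnC [w * _]mulnC.
have SA' : superabundant (p ^ logn p s * (q ^ logn q s * w)) by rewrite -E.
exact: (@exch p q (logn p s) (logn q s) t w pp pq npq cpw cqw w0 SA' t0 tj pqt).
Qed.

Lemma aux_ineq Q A C D : D < Q -> C < A -> Q * A < C * D -> False.
Proof. nia. Qed.

Lemma ppart p e : prime p -> exists N, forall s, superabundant s -> N <= s -> p ^ e %| s.
Proof.
move=> pp; have p1 := prime_gt1 pp; have p0 := prime_gt0 pp.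
set B := p ^ e.+1; set J := p + B.
exists ((B`! ^ J).+1) => s SA hs.
have [s0 _] := SA.
rewrite pfactor_dvdn //; case: (leqP e (logn p s)) => // ke; exfalso.
have e0 : 0 < e by case: e ke {B J hs}.
have Sk0 := S_gt0 p (logn p s).
have pkB : p * S p (logn p s) < B.
  apply: (@leq_trans (p * p ^ (logn p s).+1)); first by rewrite ltn_pmul2l // S_lt.
  by rewrite -expnS leq_exp2l.
have C1 : forall q, prime q -> q %| s -> q != p -> q < B.
  move=> q pq qs nqp; rewrite ltnNge; apply/negP => Bq.
  have j1 : 0 < logn q s by rewrite logn_gt0 mem_primes pq s0 qs.
  have pq1 : p < q ^ 1 by rewrite expn1; apply: leq_trans Bq; apply: leq_ltn_trans pkB; rewrite leq_pmulr.
  have npq : p != q by rewrite eq_sym.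
  have := @exch2 p q s 1 pp pq npq SA isT j1 pq1.
  rewrite expn1 /= {3}/S big_ord1 expn0 muln1.
  have := S_gt0 q (logn q s - 1).
  move: Bq pkB; nia.
have C2 : forall q, prime q -> q != p -> logn q s < J.
  move=> q pq nqp; rewrite ltnNge; apply/negP => Jj.
  have npq : p != q by rewrite eq_sym.
  have q1 := prime_gt1 pq.
  have tj : p <= logn q s by apply: leq_trans Jj; apply: leq_addr.
  have := @exch2 p q s p pp pq npq SA p0 tj (ltn_expl _ q1).
  have h1 := @S_lt q p.-1 q1; rewrite prednK // in h1.
  have h2 := S_ge q (logn q s - p).
  have h3 : logn q s - p < q ^ (logn q s - p) by apply: ltn_expl.
  have h4 : p * S p (logn p s) < logn q s - p.
    apply: leq_trans pkB _; rewrite leq_subRL //; by rewrite addnC.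
  move=> H; apply: (@aux_ineq _ _ _ _ h1 _ H).
  exact: leq_trans h4 (leq_trans (ltnW h3) h2).
have pB : p < B by rewrite /B -{1}(expn1 p) ltn_exp2l.
have Hd : s %| B`! ^ J.
  apply/dvdn_partP => // r; rewrite /= mem_primes => /and3P[pr _ rs].
  rewrite p_part pfactor_dvdn ?expn_gt0 ?fact_gt0 // lognX.
  have rB : r < B by case: (eqVneq r p) => [->|nrp] //; apply: C1.
  have lr : logn r s <= J.
    case: (eqVneq r p) => [->|nrp]; last by apply: ltnW; apply: C2.
    have := ltn_expl e.+1 p1; rewrite /J /B; lia.
  have l1 : 0 < logn r B`!.
    rewrite logn_gt0 mem_primes pr fact_gt0 /= dvdn_fact //.
    by rewrite prime_gt0 // ltnW.
  by apply: leq_trans lr _; rewrite leq_pmulr.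
have Hle : s <= B`! ^ J by apply: dvdn_leq Hd; rewrite expn_gt0 fact_gt0.
by move: hs; rewrite ltnNge Hle.
Qed.

Lemma allp n0 K : exists N, forall p, p < K -> prime p ->
  forall s, superabundant s -> N <= s -> p ^ logn p n0 %| s.
Proof.
elim: K => [|K [N1 IH]]; first by exists 0.
case: (boolP (prime K)) => pK.
- have [N2 H2] := @ppart K (logn K n0) pK.
  exists (maxn N1 N2) => p; rewrite ltnS leq_eqVlt => /orP[/eqP ->|pK'] pp s SA hs.
    by apply: H2 => //; apply: leq_trans hs; apply: leq_maxr.
  by apply: IH => //; apply: leq_trans hs; apply: leq_maxl.
- exists N1 => p; rewrite ltnS leq_eqVlt => /orP[/eqP ->|pK'] pp; first by rewrite pp in pK.
  exact: IH.
Qed.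

Theorem proposition1 (n0 : nat) (hn0 : 0 < n0) :
  exists N : nat, forall s : nat, superabundant s -> N <= s -> n0 %| s.
Proof.
have [N H] := allp n0 n0.+1.
exists N => s SA hs.
apply/dvdn_partP => // p; rewrite /= mem_primes => /and3P[pp _ pn].
rewrite p_part; apply: H => //.
by rewrite ltnS dvdn_leq.
Qed.
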